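(* Let $D\ge 2$, let $\eta=\mathrm{diag}(-1,1,\dots,1)$ be the $D\times D$ Minkowski matrix, and let $M$ be an arbitrary invertible real $D\times D$ matrix. Then $M$ can be written as $M=\lambda s$ with $\lambda$ a real Lorentz matrix (i.e. $\lambda^t\eta\lambda=\eta$) and $s$ a real symmetric matrix if and only if (i) the real matrix $\eta M^t\eta M$ has a real square root, and (ii) at least one such real square root can be written as the product $\eta\, s'$ of $\eta$ with a real symmetric matrix $s'$.
   Context: $m^t$ denotes the transpose of the matrix $m$. A square root of a matrix $A$ is a matrix $\gamma$ with $\gamma^2=A$. *)

(* Defs.v *)
From mathcomp Require Import all_boot all_order all_algebra.
From mathcomp Require Import reals.
Set Implicit Arguments. Unset Strict Implicit. Unset Printing Implicit Defensive.
Import GRing.Theory Num.Theory.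
Local Open Scope ring_scope.

Definition minkowski (R : realType) (D : nat) : 'M[R]_D :=
  diag_mx (\row_(i < D) (if (i : nat) == 0%N then -1 else 1)).

Definition lorentz (R : realType) (D : nat) (lam : 'M[R]_D) : Prop :=
  lam^T *m minkowski R D *m lam = minkowski R D.

Definition symmetric_mx (R : realType) (D : nat) (s : 'M[R]_D) : Prop :=
  s^T = s.

Definition is_sqrt_mx (R : realType) (D : nat) (A gamma : 'M[R]_D) : Prop :=
  gamma *m gamma = A.

(* Main.v *)
Require Import Defs.
From mathcomp Require Import all_boot all_order all_algebra.
From mathcomp Require Import reals.
Local Open Scope ring_scope.
Import GRing.Theory Num.Theory.

Lemma eta2 (R : realType) (D : nat) :
  minkowski R D *m minkowski R D = 1%:M.
Proof.
apply/matrixP => i j; rewrite /minkowski mul_diag_mx !mxE.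
case: (i == j); rewrite ?mulr0n ?mulr1n ?mulr0 //.
by case: ifP => _; rewrite ?mulN1r ?opprK ?mul1r.
Qed.

Lemma etaT (R : realType) (D : nat) : (minkowski R D)^T = minkowski R D.
Proof. by rewrite /minkowski tr_diag_mx. Qed.

Theorem proposition1 (R : realType) (D : nat) (hD : (2 <= D)%N)
    (M : 'M[R]_D) (hM : M \in unitmx) :
  (exists lam s : 'M[R]_D, lorentz lam /\ symmetric_mx s /\ M = lam *m s)
  <->
  (exists gamma : 'M[R]_D,
      is_sqrt_mx (minkowski R D *m M^T *m minkowski R D *m M) gamma /\
      exists s' : 'M[R]_D, symmetric_mx s' /\ gamma = minkowski R D *m s').
Proof.
set e := minkowski R D.
split.
  move=> [lam [s [hl [hs ->]]]].
  exists (e *m s); split; last by exists s.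
  rewrite /is_sqrt_mx trmx_mul hs.
  move: hl; rewrite /lorentz -/e => hl.
  rewrite !mulmxA -(mulmxA (e *m s) lam^T) -(mulmxA (e *m s) (lam^T *m e)) hl.
  by rewrite ?mulmxA.
move=> [g [hg [s [hs hgs]]]].
move: hg; rewrite /is_sqrt_mx hgs => hg.
have key : s *m e *m s = M^T *m e *m M.
  have := congr1 (mulmx e) hg.
  by rewrite !mulmxA eta2 !mul1mx -!mulmxA.
have hu : s \in unitmx.
  have : M^T *m e *m M \in unitmx.
    rewrite !unitmx_mul unitmx_tr hM andbT /=.
    by apply: (intro_unitmx (B:=e)); rewrite eta2.
  by rewrite -key !unitmx_mul => /andP [/andP [-> _] _].
exists (M *m invmx s), s; split; last split => //.
  rewrite /lorentz -/e trmx_mul trmx_inv hs.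
  have -> : invmx s *m M^T *m e *m (M *m invmx s) = invmx s *m (M^T *m e *m M) *m invmx s by rewrite !mulmxA.
  by rewrite -key !mulmxA mulVmx // mul1mx -mulmxA mulmxV // mulmx1.
by rewrite -mulmxA mulVmx // mulmx1.
Qed.
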